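(* Let $\mathbb{F}$ be a field of characteristic $p>0$. Let $P(t,y)\in\mathbb{F}[[t,y]]$ and $\varphi(t)\in\mathbb{F}[[t]]$ satisfy $$P(t,y)=(y-\varphi(t))^{p^{\ell}e}\cdot Q(t,y)$$ for some $Q\in\mathbb{F}[[t,y]]$, $\ell\ge0$ and $e\ge1$ with $\gcd(p,e)=1$. If $\varphi(0)=0$ and $Q(0,0)\neq0$, then $$\varphi(t)^{p^{\ell}}=\mathcal{D}\left(\frac{y^{2p^{\ell}}\cdot \big(\mathcal{H}^{(p^{\ell})}_y P\big)(ty,y)}{e\cdot P(ty,y)}\right),$$ where the quotient is an element of $\mathbb{F}[[t,y]]$.
   Context: For a bivariate power series $F(t,y)=\sum_{i,j\ge0}F_{i,j}t^iy^j$, the diagonal operator is $\mathcal{D}(F)(t)=\sum_{i\ge0}F_{i,i}t^i$. The Hasse derivative of order $i$ with respect to $y$, $\mathcal{H}^{(i)}_y(F)$, is the coefficient of $z^i$ in $F(t,y+z)$ (viewed as a power series in $z$ with coefficients in $\mathbb{F}[[t,y]]$). *)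

(* Defs.v *)
From HB Require Import structures.
From mathcomp Require Import all_boot all_order all_algebra.
Set Implicit Arguments. Unset Strict Implicit. Unset Printing Implicit Defensive.
Import GRing.Theory.
Local Open Scope ring_scope.

Definition ps (F : Type) := nat -> F.
(* bivariate series: i j |-> coefficient of t^i y^j *)
Definition ps2 (F : Type) := nat -> nat -> F.

Section Series.
Variable F : fieldType.

Definition ps_one : ps F := fun n => (n == 0%N)%:R.
Definition ps_mul (a b : ps F) : ps F :=
  fun n => \sum_(k < n.+1) a k * b (n - k)%N.
Definition ps_exp (a : ps F) (k : nat) : ps F := iter k (ps_mul a) ps_one.

Definition ps2_one : ps2 F := fun i j => ((i == 0%N) && (j == 0%N))%:R.
Definition ps2_mul (A B : ps2 F) : ps2 F :=
  fun i j => \sum_(a < i.+1) \sum_(b < j.+1) A a b * B (i - a)%N (j - b)%N.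
Definition ps2_exp (A : ps2 F) (k : nat) : ps2 F := iter k (ps2_mul A) ps2_one.
Definition ps2_scale (c : F) (A : ps2 F) : ps2 F := fun i j => c * A i j.

Definition ymon (k : nat) : ps2 F := fun i j => ((i == 0%N) && (j == k))%:R.

Definition y_minus (phi : ps F) : ps2 F :=
  fun i j => if j == 0%N then - phi i
             else if j == 1%N then (i == 0%N)%:R else 0.

(* Hasse derivative of order k w.r.t. y: coefficient of z^k in P(t, y+z) *)
Definition hasse_y (k : nat) (P : ps2 F) : ps2 F :=
  fun i j => 'C(j + k, k)%:R * P i (j + k)%N.

(* substitution P(t y, y) = sum P_{i,j} t^i y^(i+j) *)
Definition subst_ty (P : ps2 F) : ps2 F :=
  fun a b => if (a <= b)%N then P a (b - a)%N else 0.

Definition diag (R : ps2 F) : ps F := fun i => R i i.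

End Series.

(* Main.v *)
From HB Require Import structures.
From mathcomp Require Import all_boot all_order all_algebra.
From mathcomp Require Import boolp zify ring.
Require Import Defs.
Set Implicit Arguments. Unset Strict Implicit. Unset Printing Implicit Defensive.
Import GRing.Theory.
Local Open Scope ring_scope.


Section Base.
Variable F : fieldType.

Definition coef2 (p : {poly {poly F}}) : ps2 F := fun i j => p`_j`_i.
Definition trunc2 n (A : ps2 F) : {poly {poly F}} := \poly_(j < n) \poly_(i < n) A i j.
Definition agree i j (A B : ps2 F) := forall a b, (a <= i)%N -> (b <= j)%N -> A a b = B a b.

Lemma coef2M p q : coef2 (p * q) = ps2_mul (coef2 p) (coef2 q).
Proof.
apply/funext => i; apply/funext => j; rewrite /coef2 /ps2_mul coefM coef_sum.
rewrite exchange_big /=; apply: eq_bigr => a _; rewrite coefM; apply: eq_bigr => b _.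
done.
Qed.

Lemma coef2D p q : coef2 (p + q) = (fun i j => coef2 p i j + coef2 q i j).
Proof. by apply/funext => i; apply/funext => j; rewrite /coef2 !coefD. Qed.

Lemma coef2_1 : coef2 1 = ps2_one F.
Proof.
apply/funext => i; apply/funext => j; rewrite /coef2 /ps2_one coef1.
by case: (j == 0)%N; rewrite ?coef1 ?coef0 ?andbT ?andbF.
Qed.

Lemma agree_trunc i j A : agree i j A (coef2 (trunc2 (maxn i j).+1 A)).
Proof.
move=> a b ha hb; rewrite /coef2 /trunc2 coef_poly.
have -> : (b < (maxn i j).+1)%N by rewrite ltnS leq_max hb orbT.
by rewrite coef_poly ltnS leq_max ha.
Qed.

Lemma agree_mul i j A A' B B' : agree i j A A' -> agree i j B B' ->
  agree i j (ps2_mul A B) (ps2_mul A' B').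
Proof.
move=> hA hB a b ha hb; rewrite /ps2_mul; apply: eq_bigr => a1 _; apply: eq_bigr => b1 _.
have ha1 : (a1 <= i)%N by apply: leq_trans ha; rewrite -ltnS.
have hb1 : (b1 <= j)%N by apply: leq_trans hb; rewrite -ltnS.
rewrite hA // hB //; [apply: leq_trans ha|apply: leq_trans hb]; exact: leq_subr.
Qed.

Lemma agree_sym i j A B : agree i j A B -> agree i j B A.
Proof. by move=> h a b ha hb; rewrite h. Qed.
Lemma agree_trans i j A B C : agree i j A B -> agree i j B C -> agree i j A C.
Proof. by move=> h h' a b ha hb; rewrite h // h'. Qed.

Lemma ps2_mulA : associative (@ps2_mul F).
Proof.
move=> A B C; apply/funext => i; apply/funext => j.
set n := (maxn i j).+1.
have hA := @agree_trunc i j A; have hB := @agree_trunc i j B; have hC := @agree_trunc i j C.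
rewrite (agree_mul hA (agree_mul hB hC) (leqnn i) (leqnn j)) (agree_mul (agree_mul hA hB) hC (leqnn i) (leqnn j)).
by rewrite -!coef2M mulrA.
Qed.

Lemma ps2_mulC : commutative (@ps2_mul F).
Proof.
move=> A B; apply/funext => i; apply/funext => j.
have hA := @agree_trunc i j A; have hB := @agree_trunc i j B.
by rewrite (agree_mul hA hB (leqnn i) (leqnn j)) (agree_mul hB hA (leqnn i) (leqnn j)) -!coef2M mulrC.
Qed.

Lemma ps2_mul1 : left_id (ps2_one F) (@ps2_mul F).
Proof.
move=> A; apply/funext => i; apply/funext => j.
have hA := @agree_trunc i j A.
have h1 : agree i j (ps2_one F) (coef2 1) by rewrite coef2_1.
by rewrite (agree_mul h1 hA (leqnn i) (leqnn j)) -coef2M mul1r -hA.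
Qed.

Definition ps2_add (A B : ps2 F) : ps2 F := fun i j => A i j + B i j.
Definition ps2_opp (A : ps2 F) : ps2 F := fun i j => - A i j.
Definition ps2_zero : ps2 F := fun _ _ => 0.

Lemma ps2_mulDl : left_distributive (@ps2_mul F) ps2_add.
Proof.
move=> A B C; apply/funext => i; apply/funext => j; rewrite /ps2_mul /ps2_add -big_split.
by apply: eq_bigr => a _; rewrite -big_split; apply: eq_bigr => b _; rewrite mulrDl.
Qed.

End Base.

Section Inst.
Variable F : fieldType.
Lemma ps2_addA : associative (@ps2_add F).
Proof. by move=> A B C; apply/funext => i; apply/funext => j; rewrite /ps2_add addrA. Qed.
Lemma ps2_addC : commutative (@ps2_add F).
Proof. by move=> A B; apply/funext => i; apply/funext => j; rewrite /ps2_add addrC. Qed.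
Lemma ps2_add0 : left_id (@ps2_zero F) (@ps2_add F).
Proof. by move=> A; apply/funext => i; apply/funext => j; rewrite /ps2_add add0r. Qed.
Lemma ps2_addN : left_inverse (@ps2_zero F) (@ps2_opp F) (@ps2_add F).
Proof. by move=> A; apply/funext => i; apply/funext => j; rewrite /ps2_add addNr. Qed.
Lemma ps2_one_neq0 : ps2_one F != ps2_zero F.
Proof.
apply/eqP => h; have := congr1 (fun f => f 0%N 0%N) h; rewrite /ps2_one /ps2_zero /=.
by move/eqP; rewrite oner_eq0.
Qed.
End Inst.

Definition S2 (F : fieldType) := ps2 F.
HB.instance Definition _ (F : fieldType) := Choice.copy (S2 F) (nat -> nat -> F).
HB.instance Definition _ (F : fieldType) := GRing.isZmodule.Build (S2 F)
  (@ps2_addA F) (@ps2_addC F) (@ps2_add0 F) (@ps2_addN F).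
HB.instance Definition _ (F : fieldType) := GRing.Zmodule_isComNzRing.Build (S2 F)
  (@ps2_mulA F) (@ps2_mulC F) (@ps2_mul1 F) (@ps2_mulDl F) (@ps2_one_neq0 F).

Section Test.
Variable F : fieldType.
Lemma test (A B : S2 F) : A * B = ps2_mul A B. Proof. by []. Qed.
Lemma test2 (A B : S2 F) i j : (A + B) i j = A i j + B i j. Proof. by []. Qed.
End Test.


Section Coef.
Variable F : fieldType.
Implicit Types A B C : S2 F.

Lemma natb0 : (false%:R : F) = 0. Proof. by []. Qed.

Lemma sum_delta n m (f : nat -> F) :
  \sum_(k < n) (k == m :> nat)%:R * f k = if (m < n)%N then f m else 0.
Proof.
case: ltnP => h.
  rewrite (bigD1 (Ordinal h)) //= eqxx mul1r big1 ?addr0 // => k hk.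
  have [hkm|hkm] := eqVneq (k : nat) m; last by rewrite natb0 mul0r.
  by move: hk; rewrite (_ : k = Ordinal h) ?eqxx //; apply: val_inj.
rewrite big1 // => k _; have [hkm|hkm] := eqVneq (k : nat) m; last by rewrite natb0 mul0r.
by move: (ltn_ord k); rewrite hkm ltnNge h.
Qed.

Lemma natr_andb (x y : bool) : ((x && y)%:R : F) = x%:R * y%:R.
Proof. by case: x; case: y; rewrite ?mulr1 ?mulr0. Qed.

Definition monc a b (c : F) : S2 F := fun i j => ((i == a) && (j == b))%:R * c.

Lemma moncM a b c A i j : (monc a b c * A) i j =
  if (a <= i)%N && (b <= j)%N then c * A (i - a)%N (j - b)%N else 0.
Proof.
rewrite -[LHS]/(ps2_mul (monc a b c) A i j) /ps2_mul /monc.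
rewrite (eq_bigr (fun a1 : 'I_i.+1 => (a1 == a :> nat)%:R *
   (if (b < j.+1)%N then c * A (i - a1)%N (j - b)%N else 0))); last first.
  move=> a1 _; rewrite -(sum_delta _ _ (fun k => c * A (i - a1)%N (j - k)%N)).
  by rewrite mulr_sumr; apply: eq_bigr => b1 _; rewrite natr_andb !mulrA.
rewrite (sum_delta _ _ (fun k => if (b < j.+1)%N then c * A (i - k)%N (j - b)%N else 0)).
by rewrite !ltnS; case: (a <= i)%N; case: (b <= j)%N.
Qed.

Lemma addE A B i j : (A + B) i j = A i j + B i j. Proof. by []. Qed.
Lemma oppE A i j : (- A) i j = - A i j. Proof. by []. Qed.
Lemma subE A B i j : (A - B) i j = A i j - B i j. Proof. by []. Qed.
Lemma zeroE i j : (0 : S2 F) i j = 0. Proof. by []. Qed.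
Lemma oneE i j : (1 : S2 F) i j = ((i == 0%N) && (j == 0%N))%:R. Proof. by []. Qed.
Lemma natE n i j : (n%:R : S2 F) i j = ((i == 0%N) && (j == 0%N))%:R * n%:R.
Proof.
elim: n => [|n IH]; first by rewrite mulr0.
by rewrite mulrS addE oneE IH [in RHS]mulrS mulrDr mulr1.
Qed.
Lemma sumE I (r : seq I) (P : pred I) (G : I -> S2 F) i j :
  (\sum_(k <- r | P k) G k) i j = \sum_(k <- r | P k) G k i j.
Proof.
elim: r => [|x r IH]; first by rewrite !big_nil.
by rewrite !big_cons; case: (P x); rewrite ?addE IH.
Qed.

Lemma ps2_expE (A : S2 F) k : ps2_exp A k = A ^+ k.
Proof. by elim: k => [|k IH] //; rewrite exprS -IH /ps2_exp iterS. Qed.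

Lemma ymonE k : ymon F k = monc 0 k 1.
Proof. by apply/funext => i; apply/funext => j; rewrite /ymon /monc mulr1. Qed.

Lemma ymonM a b : (ymon F a : S2 F) * ymon F b = ymon F (a + b).
Proof.
apply/funext => i; apply/funext => j; rewrite ymonE moncM mul1r /ymon subn0 /=.
case: (ltnP 0 i) => hi.
  by rewrite (gtn_eqF hi) /=; case: ifP.
move: hi; rewrite leqn0 => /eqP -> /=.
case: leqP => hj; first by rewrite -(eqn_add2l a) subnKC.
by case: eqP => // hj'; move: hj; rewrite hj' ltnNge leq_addr.
Qed.

Lemma ymonX k : (ymon F k : S2 F) = (ymon F 1 : S2 F) ^+ k.
Proof.
elim: k => [|k IH]; first by apply/funext => i; apply/funext => j.
by rewrite exprS -IH ymonM add1n.
Qed.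

Definition cst (c : F) : S2 F := monc 0 0 c.
Lemma cstM c A i j : (cst c * A) i j = c * A i j.
Proof. by rewrite moncM !subn0. Qed.
Lemma cst_mul c d : cst c * cst d = cst (c * d).
Proof.
apply/funext => i; apply/funext => j; rewrite cstM /cst /monc.
by rewrite mulrCA.
Qed.
Lemma cst1 : cst 1 = 1.
Proof. by apply/funext => i; apply/funext => j; rewrite /cst /monc mulr1. Qed.
Lemma cst_nat n : cst n%:R = n%:R.
Proof. by apply/funext => i; apply/funext => j; rewrite natE. Qed.
Lemma scaleE c A : ps2_scale c A = cst c * A.
Proof. by apply/funext => i; apply/funext => j; rewrite cstM. Qed.

End Coef.


Section Props.
Variable F : fieldType.
Implicit Types A B C : S2 F.

Lemma mulE A B i j : (A * B) i j =
  \sum_(a < i.+1) \sum_(b < j.+1) A a b * B (i - a)%N (j - b)%N.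
Proof. by []. Qed.

Definition col0 A := forall i j, (0 < j)%N -> A i j = 0.

Lemma col0M A B : col0 A -> col0 B -> col0 (A * B).
Proof.
move=> hA hB i j hj; rewrite mulE big1 // => a _; rewrite big1 // => b _.
case: (ltnP 0 b) => hb; first by rewrite hA ?mul0r.
by rewrite hB ?mulr0 //; move: hb; rewrite leqn0 => /eqP ->; rewrite subn0.
Qed.

Lemma col0_mulE A B i j : col0 A ->
  (A * B) i j = \sum_(a < i.+1) A a 0%N * B (i - a)%N j.
Proof.
move=> hA; rewrite mulE; apply: eq_bigr => a _.
rewrite big_ord_recl big1 ?addr0 ?subn0 // => b _; by rewrite hA ?mul0r.
Qed.

Lemma mul_col0E A B i :
  (A * B) i 0%N = ps_mul (fun n => A n 0%N) (fun n => B n 0%N) i.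
Proof. by rewrite mulE /ps_mul; apply: eq_bigr => a _; rewrite big_ord1. Qed.

Definition val m A := forall i j, (i + j < m)%N -> A i j = 0.

Lemma valM m n A B : val m A -> val n B -> val (m + n) (A * B).
Proof.
move=> hA hB i j hij; rewrite mulE big1 // => a _; rewrite big1 // => b _.
have ha := ltn_ord a; have hb := ltn_ord b.
case: (ltnP (a + b) m) => h; first by rewrite hA ?mul0r.
rewrite hB ?mulr0 //; lia.
Qed.

Lemma valX k A : val 1 A -> val k (A ^+ k).
Proof.
move=> hA; elim: k => [|k IH]; first by move=> i j.
by rewrite exprS -add1n; apply: valM.
Qed.

Definition low A := forall a b, (a < b)%N -> A a b = 0.

Lemma lowM A B : low A -> low B -> low (A * B).
Proof.
move=> hA hB i j hij; rewrite mulE big1 // => a _; rewrite big1 // => b _.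
have ha := ltn_ord a; have hb := ltn_ord b.
case: (ltnP a b) => h; first by rewrite hA ?mul0r.
rewrite hB ?mulr0 //; lia.
Qed.
Lemma low1 : low 1.
Proof.
move=> a b h; rewrite oneE (_ : (b == 0%N) = false) ?andbF //.
by apply/negbTE; rewrite -lt0n; exact: leq_ltn_trans (leq0n a) h.
Qed.
Lemma lowD A B : low A -> low B -> low (A + B).
Proof. by move=> hA hB a b h; rewrite addE hA ?hB ?addr0. Qed.
Lemma lowN A : low A -> low (- A).
Proof. by move=> hA a b h; rewrite oppE hA ?oppr0. Qed.
Lemma lowX A k : low A -> low (A ^+ k).
Proof. by move=> hA; elim: k => [|k IH]; [exact: low1|rewrite exprS; apply: lowM]. Qed.
Lemma low_sum n (G : nat -> S2 F) : (forall k, low (G k)) -> low (\sum_(k < n) G k).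
Proof. by move=> h a b hab; rewrite sumE big1 // => k _; rewrite h. Qed.

Definition Y : S2 F := ymon F 1.

Lemma YXE k A i j : (Y ^+ k * A) i j = if (k <= j)%N then A i (j - k)%N else 0.
Proof. by rewrite /Y -ymonX ymonE moncM leq0n subn0 mul1r. Qed.

Lemma YX_cancel k A : A * Y ^+ k = 0 -> A = 0.
Proof.
move=> h; apply/funext => i; apply/funext => j.
have := congr1 (fun f : S2 F => f i (j + k)%N) h.
by rewrite mulrC YXE leq_addl addnK.
Qed.

End Props.


Section Inv.
Variable F : fieldType.
Implicit Types A B C W X : S2 F.

Definition geo X n : S2 F := \sum_(k < n) X ^+ k.

Lemma geoM X n : geo X n * (1 - X) = 1 - X ^+ n.
Proof.
elim: n => [|n IH]; first by rewrite /geo big_ord0 mul0r expr0 subrr.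
rewrite /geo big_ord_recr /= mulrDl -/(geo X n) IH exprS; ring.
Qed.

Lemma geo_agree X n m a b : val 1 X -> (a + b < m)%N -> (m <= n)%N ->
  geo X n a b = geo X m a b.
Proof.
move=> hX hab hmn; rewrite /geo !sumE -!(big_mkord xpredT (fun k => (X ^+ k) a b)).
rewrite (big_cat_nat (leq0n m) hmn) /= [X in _ + X]big1_seq ?addr0 //.
move=> k /andP [_]; rewrite mem_index_iota => /andP [hk _].
apply: valX => //; exact: leq_trans hab hk.
Qed.

Lemma inv_exists W : W 0%N 0%N != 0 ->
  exists Wi : S2 F, Wi * W = 1 /\ (low W -> low Wi).
Proof.
move=> hW; set c := W 0%N 0%N.
set X := 1 - cst c^-1 * W.
have hX : val 1 X.
  move=> i j; rewrite ltnS leqn0 addn_eq0 => /andP [/eqP -> /eqP ->].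
  by rewrite /X subE cstM oneE mulVf // subrr.
pose hh : S2 F := fun i j => geo X (i + j).+1 i j.
have hWX : W = cst c * (1 - X) by rewrite /X opprB addrC subrK mulrA cst_mul mulfV // cst1 mul1r.
have hh1 : hh * (1 - X) = 1.
  apply/funext => i; apply/funext => j.
  have ag : agree i j hh (geo X (i + j).+1).
    by move=> a b ha hb; rewrite /hh (geo_agree (m := (a + b).+1)) //; lia.
  have ag2 : agree i j (1 - X) (1 - X) by [].
  rewrite -[LHS]/(ps2_mul hh (1 - X) i j) (agree_mul ag ag2 (leqnn i) (leqnn j)).
  rewrite -[ps2_mul _ _]/(geo X (i + j).+1 * (1 - X)) geoM subE valX ?subr0 //.
exists (cst c^-1 * hh); split.
  by rewrite hWX mulrACA cst_mul mulVf // cst1 mul1r hh1.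
move=> hl a b hab; rewrite cstM /hh /geo sumE big1 ?mulr0 // => k _.
apply: lowX => //; apply: lowD; first exact: low1.
by apply: lowN => a' b' h; rewrite cstM hl ?mulr0.
Qed.

End Inv.


Section Binom.
Variable F : fieldType.

Lemma coefX1n n k : ((('X + 1 : {poly F}) ^+ n)`_k) = ('C(n, k))%:R.
Proof.
rewrite exprD1n coef_sum.
rewrite (eq_bigr (fun i : 'I_n.+1 => (i == k :> nat)%:R * ('C(n, i))%:R)); last first.
  by move=> i _; rewrite coefMn coefXn eq_sym mulr_natr.
rewrite (sum_delta _ _ (fun i => ('C(n, i))%:R : F)).
by case: ltnP => // h; rewrite bin_small.
Qed.

Lemma binom_frob p l j : p \in [pchar F] ->
  ('C(j + p ^ l, p ^ l))%:R = ('C(j, p ^ l))%:R + 1 :> F.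
Proof.
move=> hp; have pp : prime p := pcharf_prime hp.
rewrite -!coefX1n exprD.
have hN : ('X + 1 : {poly F}) ^+ (p ^ l) = 'X ^+ (p ^ l) + 1 ^+ (p ^ l).
  apply: exprDn_pchar; rewrite pnatX pnatE //.
  by rewrite (pchar_poly F) hp.
by rewrite hN expr1n mulrDr mulr1 coefD coefMXn ltnn subnn coefX1n bin0 addrC.
Qed.

End Binom.

Section Hasse.
Variable F : fieldType.
Implicit Types A B : S2 F.
Local Notation H k X := (@hasse_y F k X : S2 F).

Lemma hasseD k A B : H k (A + B) = (H k A : S2 F) + H k B.
Proof. by apply/funext => i; apply/funext => j; rewrite /hasse_y !addE mulrDr. Qed.
Lemma hasseN k A : H k (- A) = - (H k A : S2 F).
Proof. by apply/funext => i; apply/funext => j; rewrite /hasse_y !oppE mulrN. Qed.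
Lemma hasseB k A B : H k (A - B) = (H k A : S2 F) - H k B.
Proof. by rewrite hasseD hasseN. Qed.

Lemma hasse_col0 k A B : col0 A -> H k (A * B) = A * (H k B : S2 F).
Proof.
move=> hA; apply/funext => i; apply/funext => j.
rewrite /hasse_y !col0_mulE // mulr_sumr; apply: eq_bigr => a _.
by rewrite mulrCA.
Qed.

Lemma hasse_YX p l B : p \in [pchar F] ->
  H (p ^ l) ((Y F) ^+ (p ^ l) * B) = (Y F) ^+ (p ^ l) * (H (p ^ l) B : S2 F) + B.
Proof.
move=> hp; apply/funext => i; apply/funext => j.
rewrite addE /hasse_y !YXE leq_addl addnK binom_frob //.
case: leqP => hj; first by rewrite subnK // mulrDl mul1r.
by rewrite (bin_small hj) !add0r mul1r.
Qed.

Lemma hasse_u p l (Psi : S2 F) B : p \in [pchar F] -> col0 Psi ->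
  H (p ^ l) (((Y F) ^+ (p ^ l) - Psi) * B) =
  ((Y F) ^+ (p ^ l) - Psi) * (H (p ^ l) B : S2 F) + B.
Proof.
move=> hp hc; rewrite mulrBl hasseB hasse_YX // hasse_col0 //; ring.
Qed.

Lemma hasse_uX p l (Psi : S2 F) B k : p \in [pchar F] -> col0 Psi ->
  H (p ^ l) (((Y F) ^+ (p ^ l) - Psi) ^+ k.+1 * B) =
  ((Y F) ^+ (p ^ l) - Psi) ^+ k.+1 * (H (p ^ l) B : S2 F)
  + k.+1%:R * ((Y F) ^+ (p ^ l) - Psi) ^+ k * B.
Proof.
move=> hp hc; elim: k => [|k IH].
  by rewrite expr1 hasse_u //; ring.
rewrite exprS -mulrA hasse_u // IH.
rewrite (_ : k.+2%:R = (k.+1%:R : S2 F) + 1); last by rewrite -addn1 natrD.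
rewrite !exprS; ring.
Qed.

End Hasse.


Section Subst.
Variable F : fieldType.
Implicit Types A B : S2 F.

Definition Sg (A : S2 F) : S2 F := subst_ty A.

Lemma SgE A a b : Sg A a b = if (a <= b)%N then A a (b - a)%N else 0.
Proof. by []. Qed.

Lemma substM_inner A B a b (a1 : nat) : (a1 <= a)%N -> (a <= b)%N ->
  \sum_(c < b.+1) Sg A a1 c * Sg B (a - a1)%N (b - c)%N =
  \sum_(b1 < (b - a).+1) A a1 b1 * B (a - a1)%N (b - a - b1)%N.
Proof.
move=> h1 h2.
rewrite -(big_mkord xpredT (fun c => Sg A a1 c * Sg B (a - a1)%N (b - c)%N)).
rewrite -(big_mkord xpredT (fun b1 => A a1 b1 * B (a - a1)%N (b - a - b1)%N)).
rewrite (@big_cat_nat _ _ _ a1 0 b.+1) //=; last lia.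
rewrite [X in X + _]big1_seq ?add0r; last first.
  move=> c /andP[_]; rewrite mem_index_iota => /andP[_ hc].
  by rewrite SgE leqNgt hc /= mul0r.
rewrite (@big_cat_nat _ _ _ (a1 + (b - a).+1) a1 b.+1) ?leq_addr //=; last lia.
rewrite [X in _ + X]big1_seq ?addr0; last first.
  move=> c /andP[_]; rewrite mem_index_iota => /andP[hc1 hc2].
  rewrite [Sg B _ _]SgE (_ : (a - a1 <= b - c)%N = false) ?mulr0 //; lia.
rewrite -{1}[a1]add0n big_addn (_ : (a1 + (b - a).+1 - a1 = (b - a).+1)%N); last lia.
apply: eq_big_nat => i /andP[_ hi].
rewrite !SgE leq_addl addnK (_ : (a - a1 <= b - (i + a1))%N = true); last lia.
congr (_ * B _ _); lia.
Qed.

Lemma SgM A B : Sg (A * B) = Sg A * Sg B.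
Proof.
apply/funext => a; apply/funext => b.
rewrite SgE mulE; case: leqP => hab.
  rewrite mulE; apply: eq_bigr => a1 _; rewrite substM_inner //.
  by rewrite -ltnS.
rewrite mulE big1 // => a1 _; rewrite big1 // => c _.
have := ltn_ord a1; have := ltn_ord c => h1 h2.
rewrite !SgE; case: leqP => h3; last by rewrite mul0r.
case: leqP => h4; last by rewrite mulr0.
lia.
Qed.

Lemma SgD A B : Sg (A + B) = Sg A + Sg B.
Proof. by apply/funext => a; apply/funext => b; rewrite addE !SgE; case: ifP; rewrite ?addr0. Qed.
Lemma SgN A : Sg (- A) = - Sg A.
Proof. by apply/funext => a; apply/funext => b; rewrite oppE !SgE; case: ifP; rewrite ?oppr0. Qed.
Lemma Sg1 : Sg 1 = 1.
Proof.
apply/funext => a; apply/funext => b; rewrite SgE !oneE.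
by case: a => [|a] /=; [rewrite subn0|case: ifP].
Qed.

Lemma Sg_zmod : zmod_morphism Sg.
Proof. by move=> A B; rewrite SgD SgN. Qed.
Lemma Sg_mult : multiplicative Sg.
Proof. by split; [exact: SgM| exact: Sg1]. Qed.

HB.instance Definition _ := GRing.isZmodMorphism.Build (S2 F) (S2 F) Sg Sg_zmod.
HB.instance Definition _ := GRing.isMultiplicative.Build (S2 F) (S2 F) Sg Sg_mult.

Lemma SgYX k : Sg ((Y F) ^+ k) = (Y F) ^+ k.
Proof.
rewrite /Y -ymonX; apply/funext => a; apply/funext => b.
rewrite SgE /ymon.
by case: a => [|a] /=; [rewrite subn0|case: ifP].
Qed.

End Subst.

Section SgMore.
Variable F : fieldType.
Implicit Types A B : S2 F.
Lemma SgX A k : Sg (A ^+ k) = Sg A ^+ k. Proof. exact: rmorphXn. Qed.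
Lemma SgB A B : Sg (A - B) = Sg A - Sg B. Proof. exact: rmorphB. Qed.
Lemma Sgnat n : Sg (n%:R : S2 F) = n%:R. Proof. exact: rmorph_nat. Qed.
End SgMore.


Section Main.
Variable F : fieldType.

Definition Phi (phi : ps F) : S2 F := fun i j => if j == 0%N then phi i else 0.

Lemma col0_Phi phi : col0 (Phi phi).
Proof. by move=> i j hj; rewrite /Phi (gtn_eqF hj). Qed.
Lemma col0_1 : col0 (1 : S2 F).
Proof. by move=> i j hj; rewrite oneE (gtn_eqF hj) andbF. Qed.
Lemma col0X (A : S2 F) k : col0 A -> col0 (A ^+ k).
Proof. by move=> h; elim: k => [|k IH]; [exact: col0_1| rewrite exprS; apply: col0M]. Qed.

Lemma PhiX phi k i : ((Phi phi) ^+ k) i 0%N = ps_exp phi k i.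
Proof.
elim: k i => [|k IH] i; first by rewrite expr0 oneE andbT.
rewrite exprS mul_col0E.
rewrite (_ : (fun n => ((Phi phi) ^+ k) n 0%N) = ps_exp phi k); last by apply/funext => n; rewrite IH.
by [].
Qed.

Lemma y_minusE phi : (y_minus phi : S2 F) = Y F - Phi phi.
Proof.
apply/funext => i; apply/funext => j; rewrite subE /y_minus /Phi /Y /ymon.
case: j => [|[|j]] /=; first by rewrite andbF sub0r.
  by rewrite andbT subr0.
by rewrite andbF subr0.
Qed.

End Main.


Lemma alg (R : comRingType) (eps E Z g h SHQ SQi SQ W : R) :
  eps * E = 1 -> SQi * SQ = 1 -> h * (1 - g) = 1 ->
  (eps * (Z * Z) * (SHQ * SQi) + Z * h) * (E * (Z * (1 - g) * W * SQ)) =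
  Z * Z * (Z * (1 - g) * W * SHQ + E * W * SQ).
Proof.
move=> h1 h2 h3.
transitivity ((eps * E) * (SQi * SQ) * (Z * Z * Z * (1 - g) * W * SHQ)
   + (h * (1 - g)) * (E * Z * Z * W * SQ)); first ring.
by rewrite h1 h2 h3; ring.
Qed.

Unset Implicit Arguments.
Theorem theoremA3 (F : fieldType) (p : nat) (charp : (p \in [pchar F])%N)
    (P Q : ps2 F) (phi : ps F) (l e : nat)
    (e_ge1 : (1 <= e)%N) (cop : coprime p e)
    (HP : P = ps2_mul (ps2_exp (y_minus phi) (p ^ l * e)%N) Q)
    (phi0 : phi 0%N = 0) (Q00 : Q 0%N 0%N != 0) :
  (exists R : ps2 F,
      ps2_mul R (ps2_scale e%:R (subst_ty P))
      = ps2_mul (ymon F (2 * p ^ l)%N) (subst_ty (hasse_y (p ^ l) P))) /\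
  (forall R : ps2 F,
      ps2_mul R (ps2_scale e%:R (subst_ty P))
      = ps2_mul (ymon F (2 * p ^ l)%N) (subst_ty (hasse_y (p ^ l) P)) ->
      ps_exp phi (p ^ l) = diag R).
Proof.
have pp : prime p := pcharf_prime charp.
set N := (p ^ l)%N.
have N1 : (0 < N)%N by rewrite expn_gt0 prime_gt0.
have he : (e%:R : F) != 0.
  by rewrite -(dvdn_pcharf charp) -prime_coprime.
case: e e_ge1 cop HP he => [//|e'] _ cop HP he.
set YY := Y F.
set Ph := Phi phi.
set Psi := Ph ^+ N.
have cPsi : col0 Psi by apply: col0X; apply: col0_Phi.
have vPsi : val N Psi.
  apply: valX => i j; rewrite ltnS leqn0 addn_eq0 => /andP[/eqP -> /eqP ->].
  by rewrite /Ph /Phi /= phi0.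
have PsiE : forall i, Psi i 0%N = ps_exp phi N i by move=> i; rewrite /Psi /Ph PhiX.
have charS : p \in [pchar S2 F].
  apply/andP; split => //; apply/eqP/funext => i; apply/funext => j.
  by rewrite natE (pcharf0 charp) mulr0.
have frob : (YY - Ph) ^+ N = YY ^+ N - Psi.
  have := exprDn_pchar (YY - Ph) Ph (_ : [pchar S2 F].-nat N).
  rewrite subrK => ->; first by rewrite addrK.
  by rewrite pnatX pnatE // charS.
set u := YY ^+ N - Psi.
have HP' : (P : S2 F) = u ^+ e'.+1 * Q.
  by rewrite HP ps2_expE y_minusE exprM frob.
have HH : (hasse_y N P : S2 F) = u ^+ e'.+1 * (hasse_y N Q : S2 F) + e'.+1%:R * u ^+ e' * Q.
  by rewrite HP' hasse_uX.
pose g : S2 F := fun a b => if a == (b + N)%N then Psi a 0%N else 0.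
have lg : low g by move=> a b hab; rewrite /g (_ : (a == b + N)%N = false) //; lia.
have DE : forall a b, Sg Psi a b = if a == b then ps_exp phi N a else 0.
  move=> a b; rewrite SgE -PsiE; case: (ltngtP a b) => h.
  - by rewrite cPsi // subn_gt0.
  - by [].
  - by rewrite h subnn.
have YgE : YY ^+ N * g = Sg Psi.
  apply/funext => a; apply/funext => b.
  rewrite /YY YXE DE /g; case: (leqP N b) => hb.
    by rewrite subnK // PsiE.
  by case: eqP => // ->; rewrite -PsiE vPsi //; lia.
have g00 : (1 - g) 0%N 0%N != 0.
  by rewrite subE oneE /g (_ : (0 == 0 + N)%N = false) ?subr0 ?oner_neq0 //; lia.
have [h [hh lh]] := inv_exists g00.
have lowh : low h by apply: lh; apply: lowD; [exact: low1| exact: lowN].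
have [Qi [hQ _]] := inv_exists Q00.
set eps := cst (e'.+1%:R : F)^-1.
have heps : eps * e'.+1%:R = 1 by rewrite /eps -cst_nat cst_mul mulVf // cst1.
have vE : Sg u = YY ^+ N * (1 - g).
  by rewrite /u SgB /YY SgYX mulrBr mulr1 YgE.
have hSQ : Sg Qi * Sg Q = 1 by rewrite -SgM hQ Sg1.
have lhsE : forall R : ps2 F, ps2_mul R (ps2_scale e'.+1%:R (subst_ty P)) =
    (R : S2 F) * (e'.+1%:R * Sg P).
  by move=> R; rewrite scaleE cst_nat.
have rhsE : ps2_mul (ymon F (2 * N)) (subst_ty (hasse_y N P)) =
    YY ^+ N * YY ^+ N * Sg (hasse_y N P : S2 F).
  by rewrite ymonX mul2n -addnn exprD.
have SgP : Sg P = (YY ^+ N * (1 - g)) ^+ e'.+1 * Sg Q by rewrite HP' SgM SgX vE.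
have SgHP : Sg (hasse_y N P : S2 F) = (YY ^+ N * (1 - g)) ^+ e'.+1 * Sg (hasse_y N Q : S2 F)
   + e'.+1%:R * (YY ^+ N * (1 - g)) ^+ e' * Sg Q.
  by rewrite HH SgD !SgM !SgX Sgnat vE.
pose R0 : S2 F := eps * (YY ^+ N * YY ^+ N) * Sg ((hasse_y N Q : S2 F) * Qi) + YY ^+ N * h.
have R0ok : R0 * (e'.+1%:R * Sg P) = YY ^+ N * YY ^+ N * Sg (hasse_y N P : S2 F).
  rewrite SgP SgHP /R0 SgM exprS.
  exact: alg.
split.
  by exists R0; rewrite lhsE rhsE.
move=> R hR.
have eqR : R = R0.
  move: hR; rewrite lhsE rhsE -R0ok => hR.
  have h0 : ((R : S2 F) - R0) * (e'.+1%:R * Sg P) = 0 by rewrite mulrBl hR subrr.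
  set Wt : S2 F := e'.+1%:R * (1 - g) ^+ e'.+1 * Sg Q.
  set Wti : S2 F := eps * h ^+ e'.+1 * Sg Qi.
  have XE : e'.+1%:R * Sg P = YY ^+ (N * e'.+1) * Wt.
    by rewrite SgP exprMn exprM /Wt; ring.
  have WW : Wti * Wt = 1.
    rewrite /Wti /Wt.
    transitivity ((eps * e'.+1%:R) * (h * (1 - g)) ^+ e'.+1 * (Sg Qi * Sg Q)).
      by rewrite exprMn; ring.
    by rewrite heps hh hSQ expr1n !mul1r.
  apply: (@subr0_eq (S2 F)); apply: (@YX_cancel _ (N * e'.+1)).
  transitivity (((R : S2 F) - R0) * (YY ^+ (N * e'.+1) * Wt) * Wti).
    by rewrite -mulrA -mulrA (mulrC Wt) WW mulr1.
  by rewrite -XE h0 mul0r.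
rewrite eqR; apply/funext => a; rewrite /diag /R0 addE.
have d1 : (eps * (YY ^+ N * YY ^+ N) * Sg ((hasse_y N Q : S2 F) * Qi)) a a = 0.
  rewrite -mulrA /eps cstM -exprD /YY YXE; case: leqP => h1; last by rewrite mulr0.
  by rewrite SgE (_ : (a <= a - (N + N))%N = false) ?mulr0 //; lia.
have Zh : YY ^+ N * h = YY ^+ N + Sg Psi * h.
  rewrite -YgE; transitivity (YY ^+ N * (h * (1 - g)) + YY ^+ N * g * h); first ring.
  by rewrite hh mulr1.
have hd : forall c, h c c = (c == 0%N)%:R.
  move=> c; have hE : h = 1 + g * h.
    by transitivity (h * (1 - g) + g * h); [ring| rewrite hh].
  rewrite {1}hE addE oneE andbb mulE big1 ?addr0 // => a1 _; rewrite big1 // => b1 _.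
  rewrite /g; case: eqP => [e1|_]; last by rewrite mul0r.
  rewrite lowh ?mulr0 //; have := ltn_ord a1; have := ltn_ord b1; lia.
have z0 : (YY ^+ N) a a = 0.
  rewrite -[YY ^+ N]mulr1 /YY YXE oneE; case: leqP => // h1.
  by rewrite (_ : (a == 0)%N = false) //; lia.
rewrite d1 add0r Zh addE z0 add0r mulE.
rewrite (eq_bigr (fun a1 : 'I_a.+1 => (a1 == a :> nat)%:R * ps_exp phi N a1)); last first.
  move=> a1 _.
  rewrite (eq_bigr (fun b1 : 'I_a.+1 => (b1 == a1 :> nat)%:R *
      (ps_exp phi N a1 * h (a - a1)%N (a - a1)%N))); last first.
    move=> b1 _; rewrite DE; have [->|hne] := eqVneq (b1 : nat) a1; first by rewrite mul1r.
    by rewrite ?natb0 !mul0r.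
  rewrite (sum_delta _ _ (fun _ => ps_exp phi N a1 * h (a - a1)%N (a - a1)%N)) (ltn_ord a1) hd.
  rewrite mulrC; congr (_%:R * _); have := ltn_ord a1.
  by rewrite ltnS => ha; rewrite subn_eq0 eqn_leq ha.
by rewrite (sum_delta _ _ (ps_exp phi N)) ltnSn.
Qed.
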